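(* Let $G$ be a graph containing a cycle, and let $k\ge 0$ and $r\le \log_2(g(G)-2)-1$. Then every graph in $M^k_r(G)$ is a tree.
   Context: $g(G)$ is the girth of $G$. Colors are red, blue, green. A $k$-precolored graph is a finite graph together with an assignment of colors to at most $k$ of its vertices. The game $\mathcal{G}^k_r(H)$ on a $k$-precolored graph $H$ starts from the given precoloring and lasts $r$ rounds; in each round Spoiler may erase the colors of some currently colored vertices and then selects a vertex, which Duplicator colors with one of the three colors; after each round at most $k$ vertices may be colored. Duplicator wins if the initial partial coloring and the partial coloring after each round are proper; otherwise Spoiler wins. A subgraph $H'$ of a $k$-precolored graph $H$ is a subgraph of the underlying graph in which every vertex colored in $H'$ has the same color in $H$; it is proper if $H'\ne H$ as precolored graphs. $M^k_r$ is the family of all $k$-precolored graphs $H$ such that Spoiler wins $\mathcal{G}^k_r(H)$ while Duplicator wins $\mathcal{G}^k_r(K)$ for every proper subgraph $K$ of $H$. $M^k_r(G)$ is the set of those members of $M^k_r$ whose underlying uncolored graph is isomorphic to a subgraph of $G$. *)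

(* Defs.v *)
From mathcomp Require Import all_boot.
Set Implicit Arguments. Unset Strict Implicit. Unset Printing Implicit Defensive.

Inductive color := Red | Blue | Green.

Definition pcoloring (V : Type) := V -> option color.

Definition ncolored (V : finType) (p : pcoloring V) : nat :=
  #|[pred x | isSome (p x)]|.

Definition proper_pc (V : Type) (adj : rel V) (p : pcoloring V) : Prop :=
  forall x y a, adj x y -> p x = Some a -> p y = Some a -> False.

Definition erasure (V : Type) (q p : pcoloring V) : Prop :=
  forall x, q x = p x \/ q x = None.

Definition recolor (V : eqType) (q : pcoloring V) (v : V) (a : color) : pcoloring V :=
  fun x => if x == v then Some a else q x.

(* Duplicator wins the game G^k_r starting from the partial coloring p:
   p is proper, and for every Spoiler move of the next round (erase some
   colors, then select a vertex v, such that at most k vertices are colored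
   after the round) Duplicator has a color keeping a winning position. *)
Fixpoint dup_wins (V : finType) (adj : rel V) (k r : nat) (p : pcoloring V) : Prop :=
  proper_pc adj p /\
  match r with
  | 0 => True
  | r'.+1 =>
      forall (q : pcoloring V) (v : V),
        erasure q p ->
        #|[pred x | (x == v) || isSome (q x)]| <= k ->
        exists a : color, dup_wins adj k r' (recolor q v a)
  end.

Record pgraph := PGraph {
  pV : finType;
  padj : rel pV;
  pcol : pcoloring pV }.
Arguments padj : clear implicits.
Arguments pcol : clear implicits.

Definition k_precolored (k : nat) (H : pgraph) : Prop :=
  symmetric (padj H) /\ irreflexive (padj H) /\ ncolored (pcol H) <= k.

Definition Dwins (k r : nat) (H : pgraph) : Prop := dup_wins (padj H) k r (pcol H).
Definition Swins (k r : nat) (H : pgraph) : Prop := ~ Dwins k r H.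

Definition psubgraph (K H : pgraph) (f : pV K -> pV H) : Prop :=
  injective f /\
  (forall x y, padj K x y -> padj H (f x) (f y)) /\
  (forall x a, pcol K x = Some a -> pcol H (f x) = Some a).

Definition psub_full (K H : pgraph) (f : pV K -> pV H) : Prop :=
  bijective f /\
  (forall x y, padj H (f x) (f y) -> padj K x y) /\
  (forall x, pcol H (f x) = pcol K x).

Definition in_M (k r : nat) (H : pgraph) : Prop :=
  k_precolored k H /\ Swins k r H /\
  forall (K : pgraph) (f : pV K -> pV H),
    k_precolored k K -> psubgraph f -> ~ psub_full f -> Dwins k r K.

(* Membership in M^k_r(G): the underlying uncolored graph of H is isomorphic
   to a subgraph of G. *)
Definition in_MG (k r : nat) (T : finType) (e : rel T) (H : pgraph) : Prop :=
  in_M k r H /\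
  exists f : pV H -> T, injective f /\ (forall x y, padj H x y -> e (f x) (f y)).

Definition has_cycle_len (T : finType) (e : rel T) (n : nat) : bool :=
  (2 < n) && [exists t : n.-tuple T, uniq t && cycle e t].

Definition has_cycle (T : finType) (e : rel T) : Prop :=
  exists n, has_cycle_len e n.

(* Girth: the least length of a cycle (cycles have length <= #|T|);
   equals #|T|.+1 if there is no cycle. *)
Definition girth (T : finType) (e : rel T) : nat :=
  find (has_cycle_len e) (iota 0 #|T|.+1).

Definition is_tree (V : finType) (adj : rel V) : Prop :=
  0 < #|V| /\ (forall x y, connect adj x y) /\ ~ has_cycle adj.

(* Main.v *)
Require Import Defs.
From mathcomp Require Import all_boot.
From mathcomp Require Import zify.
From Stdlib Require Import Classical FunctionalExtensionality.
Set Implicit Arguments. Unset Strict Implicit. Unset Printing Implicit Defensive.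

Section Game.
Variable k : nat.

Lemma erasure_some (V : Type) (q p : pcoloring V) x a :
  erasure q p -> q x = Some a -> p x = Some a.
Proof. by move=> H; case: (H x) => ->. Qed.

Lemma proper_erasure (V : Type) (adj : rel V) (p q : pcoloring V) :
  proper_pc adj p -> erasure q p -> proper_pc adj q.
Proof.
move=> Hp Hq x y a Hxy Hx Hy.
exact: (Hp x y a Hxy (erasure_some Hq Hx) (erasure_some Hq Hy)).
Qed.

Lemma erasure_trans (V : Type) (q' q p : pcoloring V) :
  erasure q' q -> erasure q p -> erasure q' p.
Proof. move=> H1 H2 x; case: (H1 x) => ->; [exact: H2|by right]. Qed.

Lemma dup_wins_proper (V : finType) (adj : rel V) r p :
  dup_wins adj k r p -> proper_pc adj p.
Proof. by case: r => [[]|r []]. Qed.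

Lemma dup_wins_erasure (V : finType) (adj : rel V) r p q :
  dup_wins adj k r p -> erasure q p -> dup_wins adj k r q.
Proof.
elim: r p q => [|r IH] p q /= [Hp Hm] Hq; split; try exact: proper_erasure Hp Hq.
- done.
- move=> q' v Hq' Hc; exact: Hm q' v (erasure_trans Hq' Hq) Hc.
Qed.

Lemma dup_wins_pred (V : finType) (adj : rel V) r p :
  dup_wins adj k r.+1 p -> dup_wins adj k r p.
Proof.
elim: r p => [|r IH] p /= [Hp Hm]; split=> //.
move=> q v Hq Hc; have [a Ha] := Hm q v Hq Hc; exists a; exact: IH.
Qed.

Lemma card_inj_le (V1 V2 : finType) (f : V1 -> V2) (P1 : pred V1) (P2 : pred V2) :
  injective f -> (forall x1, P1 x1 -> P2 (f x1)) -> #|P1| <= #|P2|.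
Proof.
move=> inj H; rewrite -(card_imset P1 inj); apply: subset_leq_card.
by apply/subsetP => x2 /imsetP [x1 Hx1 ->]; apply: H.
Qed.

Lemma card_inj_ge (V1 V2 : finType) (f : V1 -> V2) (P1 : pred V1) (P2 : pred V2) :
  injective f -> (forall x2, P2 x2 -> exists2 x1, P1 x1 & f x1 = x2) -> #|P2| <= #|P1|.
Proof.
move=> inj H; rewrite -(card_imset P1 inj); apply: subset_leq_card.
by apply/subsetP => x2 /H [x1 Hx1 <-]; apply: imset_f.
Qed.

Lemma dup_wins_embed (V1 V2 : finType) (adj1 : rel V1) (adj2 : rel V2) (f : V1 -> V2) :
  injective f -> (forall x y, adj1 x y -> adj2 (f x) (f y)) ->
  forall r (p2 : pcoloring V2), dup_wins adj2 k r p2 ->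
  dup_wins adj1 k r (fun x => p2 (f x)).
Proof.
move=> inj Hadj; elim=> [|r IH] p2 /= [Hp Hm].
  split=> // x y a Hxy Hx Hy; exact: Hp _ _ _ (Hadj _ _ Hxy) Hx Hy.
split; first by move=> x y a Hxy Hx Hy; exact: Hp _ _ _ (Hadj _ _ Hxy) Hx Hy.
move=> q1 v1 Hq1 Hc.
pose q2 : pcoloring V2 :=
  fun x2 => if [pick x1 | f x1 == x2] is Some x1 then q1 x1 else None.
have q2f x1 : q2 (f x1) = q1 x1.
  rewrite /q2; case: pickP => [y /eqP /inj -> //|/(_ x1)]; by rewrite eqxx.
have Hq2 : erasure q2 p2.
  move=> x2; rewrite /q2; case: pickP => [y /eqP <-|_]; last by right.
  exact: Hq1 y.
have Hc2 : #|[pred x | (x == f v1) || isSome (q2 x)]| <= k.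
  apply: leq_trans Hc; apply: (card_inj_ge inj) => x2 /orP [/eqP ->|].
    by exists v1; rewrite /= ?eqxx.
  rewrite /q2; case: pickP => [y /eqP <- Hs|//]; exists y => //.
  by rewrite /= Hs orbT.
have [a Ha] := Hm q2 (f v1) Hq2 Hc2.
exists a.
suff -> : recolor q1 v1 a = (fun x => recolor q2 (f v1) a (f x)) by exact: IH.
by apply: functional_extensionality => x; rewrite /recolor (inj_eq inj) q2f.
Qed.

End Game.

Definition sadj (V : finType) (adj : rel V) (W : {set V}) : rel {x : V | x \in W} :=
  fun x y => adj (val x) (val y).
Arguments sadj {V} adj W.

Definition diamW (V : finType) (adj : rel V) (W : {set V}) (m : nat) :=
  forall x y, x \in W -> y \in W ->
  exists s, [/\ path adj x s, last x s = y, all (fun z => z \in W) s & size s <= m].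

Lemma diam_weak (V : finType) (adj : rel V) (W U : {set V}) m x y :
  diamW adj W m -> W \subset U -> x \in W -> y \in W ->
  exists s, [/\ path adj x s, last x s = y, all (fun z => z \in U) s & size s <= m].
Proof.
move=> dW sWU hx hy; have [s [h1 h2 h3 h4]] := dW x y hx hy; exists s; split=> //.
by apply: sub_all h3 => z; apply: (subsetP sWU).
Qed.

Lemma key (k : nat) (V : finType) (adj : rel V) : symmetric adj ->
  forall r (p : pcoloring V), ~ dup_wins adj k r p ->
  exists W : {set V}, diamW adj W (2 ^ r) /\
    ~ dup_wins (sadj adj W) k r (fun x => p (val x)).
Proof.
move=> sym.
have improper : forall r p, ~ proper_pc adj p -> exists W : {set V},
    diamW adj W (2 ^ r) /\ ~ dup_wins (sadj adj W) k r (fun x => p (val x)).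
  move=> r p Hp.
  have [x [y [a [Hxy Hx Hy]]]] :
      exists x y a, [/\ adj x y, p x = Some a & p y = Some a].
    apply: NNPP => Hne; apply: Hp => x y a Hxy Hx Hy; apply: Hne; by exists x, y, a.
  exists [set x; y]; split.
  - have e0 : 0 < 2 ^ r by rewrite expn_gt0.
    move=> u w; rewrite !inE => /orP[]/eqP-> /orP[]/eqP->.
    + by exists [::]; split.
    + by exists [::y]; split; rewrite /= ?Hxy ?inE ?eqxx ?orbT.
    + exists [::x]; split; rewrite /= ?inE ?eqxx ?orbT // andbT sym. exact: Hxy.
    + by exists [::]; split.
  - move=> /dup_wins_proper Hpr.
    have hx : x \in [set x; y] by rewrite !inE eqxx.
    have hy : y \in [set x; y] by rewrite !inE eqxx orbT.
    exact: (Hpr (exist _ x hx) (exist _ y hy) a Hxy Hx Hy).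
elim=> [|r IH] p Hn.
  case: (classic (proper_pc adj p)) => Hp; last exact: improper.
  by case: Hn; split.
case: (classic (proper_pc adj p)) => Hp; last exact: improper.
have [q [v [Hq Hc Ha]]] : exists q v, [/\ erasure q p,
    #|[pred x | (x == v) || isSome (q x)]| <= k &
    forall a, ~ dup_wins adj k r (recolor q v a)].
  apply: NNPP => Hne; apply: Hn; split=> // q v Hq Hc.
  apply: NNPP => Hna; apply: Hne; exists q, v; split=> // a Ha; apply: Hna.
  by exists a.
have outside : forall a (W : {set V}), diamW adj W (2 ^ r) ->
    ~ dup_wins (sadj adj W) k r (fun x => recolor q v a (val x)) -> v \notin W ->
    exists W : {set V}, diamW adj W (2 ^ r.+1) /\
      ~ dup_wins (sadj adj W) k r.+1 (fun x => p (val x)).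
  move=> a W dW nW vW; exists W; split.
    move=> x y hx hy; have [s [h1 h2 h3 h4]] := dW x y hx hy; exists s; split=> //.
    apply: leq_trans h4 _; by rewrite expnS mul2n -addnn leq_addr.
  move=> Hw; apply: nW.
  have E : (fun x : {x | x \in W} => recolor q v a (val x)) = (fun x => q (val x)).
    apply: functional_extensionality => -[x hx]; rewrite /recolor /=.
    case: eqP => // ex; move: vW; by rewrite -ex hx.
  rewrite E; apply: dup_wins_pred; apply: dup_wins_erasure Hw _.
  move=> [x hx] /=; exact: Hq x.
have [WR [dR nR]] := IH _ (Ha Red).
have [WB [dB nB]] := IH _ (Ha Blue).
have [WG [dG nG]] := IH _ (Ha Green).
case: (boolP (v \in WR)) => vR; last exact: outside Red WR dR nR vR.
case: (boolP (v \in WB)) => vB; last exact: outside Blue WB dB nB vB.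
case: (boolP (v \in WG)) => vG; last exact: outside Green WG dG nG vG.
set U := WR :|: WB :|: WG.
have sR : WR \subset U by apply: subset_trans (subsetUl _ _) (subsetUl _ _).
have sB : WB \subset U by apply: subset_trans (subsetUr WR WB) (subsetUl _ WG).
have sG : WG \subset U by apply: subsetUr.
have vU : v \in U by rewrite !inE vR.
exists U; split.
  have toV : forall z, z \in U -> exists s, [/\ path adj z s, last z s = v,
      all (fun u => u \in U) s & size s <= 2 ^ r].
    move=> z /setUP [/setUP [hz|hz]|hz].
    + exact: diam_weak dR sR hz vR.
    + exact: diam_weak dB sB hz vB.
    + exact: diam_weak dG sG hz vG.
  have fromV : forall z, z \in U -> exists s, [/\ path adj v s, last v s = z,
      all (fun u => u \in U) s & size s <= 2 ^ r].
    move=> z /setUP [/setUP [hz|hz]|hz].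
    + exact: diam_weak dR sR vR hz.
    + exact: diam_weak dB sB vB hz.
    + exact: diam_weak dG sG vG hz.
  move=> x y hx hy.
  have [s1 [p1 l1 a1 z1]] := toV x hx.
  have [s2 [p2 l2 a2 z2]] := fromV y hy.
  exists (s1 ++ s2); split.
  - by rewrite cat_path p1 l1 p2.
  - by rewrite last_cat l1 l2.
  - by rewrite all_cat a1 a2.
  - by rewrite size_cat expnS mul2n -addnn leq_add.
move=> [_ Hm].
pose qU : pcoloring {x | x \in U} := fun x => q (val x).
have HqU : erasure qU (fun x => p (val x)) by move=> x; exact: Hq (val x).
have HcU : #|[pred x | (x == exist _ v vU) || isSome (qU x)]| <= k.
  apply: leq_trans Hc; apply: (card_inj_le val_inj) => x /orP [/eqP ->|hs].
    by rewrite /= eqxx.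
  by rewrite /= -/(qU x) hs orbT.
have [a Hwa] := Hm qU (exist _ v vU) HqU HcU.
have emb : forall W : {set V}, W \subset U ->
    dup_wins (sadj adj W) k r (fun x => recolor q v a (val x)).
  move=> W sWU.
  pose f (x : {x | x \in W}) : {x | x \in U} := exist _ (val x) (subsetP sWU _ (valP x)).
  have finj : injective f by move=> x y H; apply: val_inj; exact: (congr1 val H).
  have H1 := dup_wins_embed (adj1 := sadj adj W) finj (fun x y h => h) Hwa.
  suff -> : (fun x : {x | x \in W} => recolor q v a (val x)) =
    (fun x => recolor qU (exist _ v vU) a (f x)) by [].
  apply: functional_extensionality => -[x hx].
  rewrite /recolor /f /=; by congr (if _ then _ else _).
case: a Hwa emb => Hwa emb; [exact: nR (emb _ sR)|exact: nB (emb _ sB)|exact: nG (emb _ sG)].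
Qed.

Lemma path_take (V : Type) (adj : rel V) x s n : path adj x s -> path adj x (take n s).
Proof. by rewrite -{1}(cat_take_drop n s) cat_path => /andP []. Qed.

Lemma twopaths (V : finType) (adj : rel V) : symmetric adj ->
  forall P a Q, path adj a P -> path adj a Q -> uniq (a :: P) -> uniq (a :: Q) ->
  last a P = last a Q -> P != Q ->
  exists c : seq V, [/\ 2 < size c, size c <= size P + size Q, uniq c & cycle adj c].
Proof.
move=> sym; elim=> [|x P IH] a Q pP pQ uP uQ eL nPQ.
  case: Q pQ uQ eL nPQ => [//|y Q] _ /= /andP [aQ _] eL _.
  by rewrite eL mem_last in aQ.
case: Q pQ uQ eL nPQ => [|y Q] pQ uQ eL nPQ.
  move: uP => /= /andP [aP _]; move: eL => /= eL.
  by rewrite -eL mem_last in aP.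
case: (eqVneq x y) => [exy|nxy].
  subst y.
  move: pP pQ uP uQ => /= /andP [_ pP] /andP [_ pQ] /andP [_ uP] /andP [_ uQ].
  rewrite eqseq_cons eqxx /= in nPQ.
  have [c [c2 cs cu cc]] := IH x Q pP pQ uP uQ eL nPQ.
  exists c; split=> //; rewrite /=; move: cs; generalize (size c) (size P) (size Q); clear; lia.
set PP := x :: P; set QQ := y :: Q.
have uPP : uniq PP by move: uP => /= /andP [_].
have uQQ : uniq QQ by move: uQ => /= /andP [_].
have aPP : a \notin PP by move: uP => /= /andP [].
have aQQ : a \notin QQ by move: uQ => /= /andP [].
have hasQ : has (fun z => z \in QQ) PP.
  apply/hasP; exists (last x P); first exact: mem_last.
  by move: eL => /= ->; exact: mem_last.
set i := find (fun z => z \in QQ) PP.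
have iP : i < size PP by rewrite -has_find.
set w := nth a PP i.
have wQ : w \in QQ by exact: (nth_find a hasQ).
have wP : w \in PP by exact: mem_nth.
set j := index w QQ.
have jQ : j < size QQ by rewrite index_mem.
set Q1 := take j QQ.
have QQe : take j.+1 QQ = rcons Q1 w by rewrite (take_nth a jQ) nth_index.
have wQ1 : w \notin Q1.
  have := uQQ; rewrite -(cat_take_drop j QQ) cat_uniq => /and3P [_ /hasPn H _].
  apply: H; rewrite (drop_nth a jQ) nth_index //; exact: mem_head.
have PPe : take i.+1 PP = rcons (take i PP) w by rewrite (take_nth a iP).
exists (a :: take i PP ++ w :: rev Q1); split.
- rewrite /= size_cat /= size_rev size_take iP.
  case: (posnP i) => [i0|]; last by generalize (size Q1) i; clear; lia.
  have : j != 0.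
    rewrite /j /w i0 /=.
    have -> : (y == x) = false by rewrite eq_sym; exact/negbTE.
    done.
  rewrite /Q1 size_take jQ; generalize i j i0; clear; lia.
- rewrite /= size_cat /= size_rev size_take iP /Q1 size_take jQ.
  move: iP jQ; rewrite /PP /QQ /=; generalize (size P) (size Q) i j; clear; lia.
- rewrite /= mem_cat negb_or inE negb_or mem_rev cat_uniq /= rev_uniq.
  have tnQ : forall z, z \in take i PP -> z \notin QQ.
    move=> z /(nthP a) [l]; rewrite size_take iP => li <-.
    by rewrite nth_take // (before_find a li).
  apply/and5P; split.
  + apply/and3P; split; [by apply: contra aPP; apply: mem_take
      | by apply: contraNneq aPP => -> | by apply: contra aQQ; apply: mem_take].
  + exact: take_uniq.
  + rewrite negb_or; apply/andP; split; first by apply/negP => /tnQ; rewrite wQ.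
    apply/hasPn => z; rewrite mem_rev => zQ1; apply/negP => /tnQ.
    by rewrite (mem_take zQ1).
  + by rewrite mem_rev.
  + exact: take_uniq.
- rewrite /cycle rcons_cat rcons_cons -cat_rcons -PPe cat_path.
  apply/andP; split; first exact: path_take.
  rewrite PPe last_rcons -rev_cons.
  have pQ1 : path adj a (rcons Q1 w) by rewrite -QQe; apply: path_take.
  have := rev_path adj a (rcons Q1 w).
  rewrite last_rcons belast_rcons => ->.
  by rewrite (eq_path (e' := adj)) // => u v; rewrite sym.
Qed.

Lemma cyc_girth (T : finType) (e : rel T) (V : finType) (adj : rel V) (f : V -> T) :
  injective f -> (forall x y, adj x y -> e (f x) (f y)) ->
  forall c : seq V, 2 < size c -> uniq c -> cycle adj c -> girth e <= size c.
Proof.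
move=> finj fadj c c2 cu cc.
have mu : uniq (map f c) by rewrite map_inj_uniq.
have mc : cycle e (map f c).
  rewrite cycle_map; apply: sub_cycle cc => x y; exact: fadj.
have hc : has_cycle_len e (size c).
  apply/andP; split=> //; apply/existsP; exists (map_tuple f (in_tuple c)).
  by rewrite /= mu mc.
have sT : size c <= #|T|.
  by rewrite -(size_map f) -(card_uniqP mu) max_card.
rewrite /girth leqNgt; apply/negP => /(before_find 0).
by rewrite nth_iota // add0n hc.
Qed.

Lemma empty_wins (k : nat) (V : finType) (adj : rel V) :
  (V -> False) -> forall r p, dup_wins adj k r p.
Proof.
move=> He; elim=> [|r IH] p /=; split=> //; try by move=> x; case: (He x).
Qed.

Theorem lemma7 (T : finType) (e : rel T) (k r : nat) :
  symmetric e -> irreflexive e -> has_cycle e ->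
  r.+1 <= trunc_log 2 (girth e - 2) ->
  forall H : pgraph, in_MG k r e H -> is_tree (padj H).
Proof.
move=> esym eirr _ Hr H [[[Hsym [Hirr Hnc]] [HS Hmin]] [f [finj fadj]]].
have [W [dW nW]] := key Hsym HS.
have WT : forall x, x \in W.
  move=> x; apply: NNPP => xW; apply: nW.
  apply: (Hmin (PGraph (sadj (padj H) W) (fun x => pcol H (val x))) val).
  - split; first by move=> x1 y1; exact: Hsym.
    split; first by move=> x1; exact: Hirr.
    rewrite /ncolored; apply: leq_trans Hnc; apply: (card_inj_le val_inj) => x1 //.
  - by split; [exact: val_inj|split].
  - move=> [[g _ Kg] _]; apply: xW; rewrite -(Kg x); exact: valP.
have D2 : 2 ^ r.+1 <= girth e - 2.
  case: (posnP (girth e - 2)) => [g0|gp].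
    by move: Hr; rewrite g0 trunc_log0.
  apply: leq_trans (trunc_logP (isT : 1 < 2) gp).
  by rewrite leq_exp2l.
split; [|split].
- have [x _] : exists x : pV H, True.
    apply: NNPP => hne; apply: HS; apply: empty_wins => x; apply: hne; by exists x.
  by rewrite -cardsT card_gt0; apply/set0Pn; exists x; rewrite inE.
- move=> x y; apply/connectP.
  have [s [h1 h2 _ _]] := dW x y (WT x) (WT y); by exists s.
- move=> [n /andP [n2 /existsP [t /andP [tu tc]]]].
  have gn := cyc_girth finj fadj.
  move: (size_tuple t) tu tc; move: (tval t) => ts szt tu tc.
  have ts2 : 2 < size ts by rewrite szt.
  have gts := gn ts ts2 tu tc.
  case: ts szt tu tc gts ts2 => [|a s] // szt tu tc gts ts2.
  set m := 2 ^ r.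
  have m2 : 2 ^ r.+1 = m + m by rewrite expnS mul2n addnn.
  rewrite m2 in D2.
  have ss : m.+1 <= size s by move: gts D2 ts2 => /=; generalize (girth e) (size s) m; clear; lia.
  set Q := take m.+1 s.
  have szQ : size Q = m.+1 by rewrite size_takel.
  have pQ : path (padj H) a Q.
    apply: path_take; move: tc; rewrite /cycle rcons_path => /andP [] //.
  have uQ : uniq (a :: Q).
    move: tu => /= /andP [aS uS]; rewrite take_uniq // andbT.
    by apply: contra aS; apply: mem_take.
  have [s1 [p1 l1 _ z1]] := dW a (last a Q) (WT a) (WT _).
  case: (shortenP p1) l1 => P' pP' uP' sP' l1.
  have szP : size P' <= m.
    apply: leq_trans z1; apply: uniq_leq_size sP'; by case/andP: uP'.
  have nPQ : P' != Q by apply: contraTneq szP => ->; rewrite szQ ltnn.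
  have [c [c2 cs cu cc]] := twopaths Hsym pP' pQ uP' uQ l1 nPQ.
  have cs' : size c <= m + m.+1 by apply: leq_trans cs _; rewrite szQ leq_add2r.
  have := gn c c2 cu cc; move: cs' D2 c2.
  generalize (girth e) (size c) m; clear; lia.
Qed.
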